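(* Let $G$ be a finitely presented group with only finitely many conjugacy classes of finite subgroups, and let $G'$ be a group. If $G$ and $G'$ are $\mathrm{AE}$-equivalent, then there exists a morphism $\varphi:G\to G'$ that is injective on finite subgroups and maps any two non-conjugate finite subgroups of $G$ to non-conjugate finite subgroups of $G'$.
   Context: Two groups are $\mathrm{AE}$-equivalent if they satisfy the same first-order sentences (in the language of groups) of the form $\forall\bar x\exists\bar y\,\theta(\bar x,\bar y)$ with $\theta$ quantifier-free. *)

(* Defs.v *)
From Stdlib Require Import List.

Record Group := {
  carrier :> Type;
  gmul : carrier -> carrier -> carrier;
  ginv : carrier -> carrier;
  gone : carrier;
  gmulA : forall x y z, gmul x (gmul y z) = gmul (gmul x y) z;
  gmul1l : forall x, gmul gone x = x;
  gmulVl : forall x, gmul (ginv x) x = gone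
}.

Arguments gmul {g}. Arguments ginv {g}. Arguments gone {g}.

Definition fin (n : nat) : Type := { i : nat | i < n }.

Inductive term (V : Type) : Type :=
| TVar : V -> term V
| TOne : term V
| TMul : term V -> term V -> term V
| TInv : term V -> term V.
Arguments TVar {V}. Arguments TOne {V}. Arguments TMul {V}. Arguments TInv {V}.

Fixpoint teval {G : Group} {V : Type} (e : V -> G) (t : term V) : G :=
  match t with
  | TVar v => e v
  | TOne => gone
  | TMul a b => gmul (teval e a) (teval e b)
  | TInv a => ginv (teval e a)
  end.

Inductive qf (V : Type) : Type :=
| QTrue : qf V
| QEq : term V -> term V -> qf V
| QNot : qf V -> qf V
| QAnd : qf V -> qf V -> qf V
| QOr : qf V -> qf V -> qf V.
Arguments QTrue {V}. Arguments QEq {V}. Arguments QNot {V}.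
Arguments QAnd {V}. Arguments QOr {V}.

Fixpoint qholds {G : Group} {V : Type} (e : V -> G) (f : qf V) : Prop :=
  match f with
  | QTrue => True
  | QEq a b => teval e a = teval e b
  | QNot p => ~ qholds e p
  | QAnd p q => qholds e p /\ qholds e q
  | QOr p q => qholds e p \/ qholds e q
  end.

(* An AE-sentence  forall x_0..x_{n-1} exists y_0..y_{m-1}, theta(x,y),
   with theta quantifier-free in the variables (inl i) = x_i, (inr j) = y_j. *)
Definition AE_holds (G : Group) (n m : nat) (theta : qf (fin n + fin m)) : Prop :=
  forall x : fin n -> G, exists y : fin m -> G,
    qholds (fun v => match v with inl i => x i | inr j => y j end) theta.

Definition AE_equivalent (G G' : Group) : Prop :=
  forall (n m : nat) (theta : qf (fin n + fin m)),
    AE_holds G n m theta <-> AE_holds G' n m theta.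

Definition is_hom {G H : Group} (f : G -> H) : Prop :=
  forall x y, f (gmul x y) = gmul (f x) (f y).

(* G is finitely presented: there are finitely many generators g_0..g_{n-1}
   generating G and finitely many relations (u_k = v_k) satisfied by them such
   that G has the universal property of the presentation < g | u_k = v_k >. *)
Definition finitely_presented (G : Group) : Prop :=
  exists (n : nat) (g : fin n -> G) (rels : list (term (fin n) * term (fin n))),
    (forall x : G, exists t : term (fin n), teval g t = x) /\
    (forall r, In r rels -> teval g (fst r) = teval g (snd r)) /\
    (forall (H : Group) (h : fin n -> H),
        (forall r, In r rels -> teval h (fst r) = teval h (snd r)) ->
        exists f : G -> H, is_hom f /\ forall i, f (g i) = h i).

Definition subgroup {G : Group} (S : G -> Prop) : Prop :=
  S gone /\ (forall x y, S x -> S y -> S (gmul x y)) /\ (forall x, S x -> S (ginv x)).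

Definition finite_subgroup {G : Group} (S : G -> Prop) : Prop :=
  subgroup S /\ exists l : list G, forall x, S x -> In x l.

Definition conjugate {G : Group} (H K : G -> Prop) : Prop :=
  exists g : G, forall x, K x <-> exists h, H h /\ x = gmul (gmul g h) (ginv g).

Definition finitely_many_conj_classes_finite_subgroups (G : Group) : Prop :=
  exists l : list (G -> Prop),
    forall H, finite_subgroup H -> exists K, In K l /\ conjugate H K.

Definition image {G G' : Group} (f : G -> G') (S : G -> Prop) : G' -> Prop :=
  fun y => exists x, S x /\ f x = y.

(* Main.v *)
Require Import Defs.
From Stdlib Require Import List Classical IndefiniteDescription.

Lemma lcancel (G : Group) (a b c : G) : gmul a b = gmul a c -> b = c.
Proof.
  intro H. transitivity (gmul (ginv a) (gmul a b)).
  - rewrite gmulA, gmulVl, gmul1l; reflexivity.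
  - rewrite H, gmulA, gmulVl, gmul1l; reflexivity.
Qed.

Lemma gmulV (G : Group) (x : G) : gmul x (ginv x) = gone.
Proof.
  set (y := gmul x (ginv x)).
  assert (Hyy : gmul y y = y).
  { unfold y. rewrite <- gmulA, (gmulA G (ginv x) x (ginv x)), gmulVl, gmul1l. reflexivity. }
  transitivity (gmul (ginv y) (gmul y y)).
  - rewrite gmulA, gmulVl, gmul1l; reflexivity.
  - rewrite Hyy. apply gmulVl.
Qed.

Lemma gmul1r (G : Group) (x : G) : gmul x gone = x.
Proof. rewrite <- (gmulVl G x), gmulA, gmulV, gmul1l. reflexivity. Qed.

Lemma ginvK (G : Group) (x : G) : ginv (ginv x) = x.
Proof. apply (lcancel G (ginv x)). rewrite gmulV, gmulVl. reflexivity. Qed.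

Lemma ginvM (G : Group) (a b : G) : ginv (gmul a b) = gmul (ginv b) (ginv a).
Proof.
  apply (lcancel G (gmul a b)). rewrite gmulV.
  rewrite <- gmulA, (gmulA G b), gmulV, gmul1l, gmulV. reflexivity.
Qed.

Lemma hom_one (G H : Group) (phi : G -> H) : is_hom phi -> phi gone = gone.
Proof.
  intro Hh. apply (lcancel H (phi gone)). rewrite <- Hh, gmul1l, gmul1r. reflexivity.
Qed.

Lemma hom_inv (G H : Group) (phi : G -> H) : is_hom phi -> forall x, phi (ginv x) = ginv (phi x).
Proof.
  intros Hh x. apply (lcancel H (phi x)). rewrite <- Hh, gmulV, gmulV. apply hom_one; auto.
Qed.

Definition cj {G : Group} (g h : G) : G := gmul (gmul g h) (ginv g).

Lemma cj_hom (G H : Group) (phi : G -> H) : is_hom phi -> forall g h, phi (cj g h) = cj (phi g) (phi h).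
Proof. intros Hh g h. unfold cj. rewrite !Hh, hom_inv; auto. Qed.

Lemma cj_comp (G : Group) (a b h : G) : cj a (cj b h) = cj (gmul a b) h.
Proof. unfold cj. rewrite ginvM, !gmulA. reflexivity. Qed.

Lemma cj_one (G : Group) (h : G) : cj gone h = h.
Proof.
  unfold cj. rewrite gmul1l. replace (@ginv G gone) with (@gone G).
  - apply gmul1r.
  - rewrite <- (gmulVl G gone) at 1. apply gmul1r.
Qed.

Lemma cj_inv (G : Group) (g h : G) : cj (ginv g) (cj g h) = h.
Proof. rewrite cj_comp, gmulVl. apply cj_one. Qed.

Lemma cj_inj (G : Group) (g a b : G) : cj g a = cj g b -> a = b.
Proof. intro H. rewrite <- (cj_inv G g a), <- (cj_inv G g b), H. reflexivity. Qed.

Lemma conj_sym (G : Group) (H K : G -> Prop) : conjugate H K -> conjugate K H.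
Proof.
  intros [g Hg]. exists (ginv g). intro x. split.
  - intro Hx. exists (cj g x). split.
    + apply Hg. exists x. split; auto.
    + symmetry. apply (cj_inv G g x).
  - intros [h [Hh ->]]. apply Hg in Hh. destruct Hh as [h' [Hh' ->]].
    change (H (cj (ginv g) (cj g h'))). rewrite cj_inv. exact Hh'.
Qed.

Lemma conj_trans (G : Group) (H K M : G -> Prop) :
  conjugate H K -> conjugate K M -> conjugate H M.
Proof.
  intros [g Hg] [g' Hg']. exists (gmul g' g). intro x. split.
  - intro Hx. apply Hg' in Hx. destruct Hx as [k [Hk ->]].
    apply Hg in Hk. destruct Hk as [h [Hh ->]]. exists h. split; auto.
    apply (cj_comp G g' g h).
  - intros [h [Hh ->]]. apply Hg'. exists (cj g h). split.
    + apply Hg. exists h; auto.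
    + symmetry. apply (cj_comp G g' g h).
Qed.

Lemma conj_ext (G : Group) (H K K' : G -> Prop) :
  (forall x, K x <-> K' x) -> conjugate H K -> conjugate H K'.
Proof.
  intros E [g Hg]. exists g. intro x. rewrite <- E. apply Hg.
Qed.

Lemma conj_image (G G' : Group) (phi : G -> G') : is_hom phi ->
  forall H K, conjugate H K -> conjugate (image phi H) (image phi K).
Proof.
  intros Hh H K [g Hg]. exists (phi g). intro y. split.
  - intros [x [Kx <-]]. apply Hg in Kx. destruct Kx as [h [Hh' ->]].
    exists (phi h). split.
    + exists h; auto.
    + apply (cj_hom G G' phi Hh g h).
  - intros [h' [[h [Hh' <-]] ->]]. exists (cj g h). split.
    + apply Hg. exists h; auto.
    + apply (cj_hom G G' phi Hh g h).
Qed.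

Lemma exact_list_aux {A : Type} (P : A -> Prop) (l : list A) :
  exists l', forall x, (P x /\ In x l) <-> In x l'.
Proof.
  induction l as [|a l [l' IH]].
  - exists nil. intros x; simpl; tauto.
  - destruct (classic (P a)) as [Pa|nPa].
    + exists (a :: l'). intro x. simpl. rewrite <- IH. split.
      * intros [Px [<-|Hi]]; auto.
      * intros [<-|[Px Hi]]; auto.
    + exists l'. intro x. simpl. rewrite <- IH. split.
      * intros [Px [<-|Hi]]; auto. contradiction.
      * intros [Px Hi]; auto.
Qed.

Lemma exact_list {A : Type} (P : A -> Prop) (l : list A) :
  (forall x, P x -> In x l) -> exists l', forall x, P x <-> In x l'.
Proof.
  intro Hc. destruct (exact_list_aux P l) as [l' H]. exists l'. intro x.
  rewrite <- H. split; [intro p; split; auto | tauto].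
Qed.

Lemma reps (G : Group) (l : list (G -> Prop)) :
  exists L : list (list G), forall K, In K l -> forall H, finite_subgroup H ->
    conjugate H K -> exists S, In S L /\ conjugate H (fun w => In w S).
Proof.
  induction l as [|K0 l [L IH]].
  - exists nil. intros K [].
  - destruct (classic (exists H0, finite_subgroup H0 /\ conjugate H0 K0))
      as [[H0 [[_ [l0 Hl0]] Hc0]] | Hn].
    + destruct (exact_list H0 l0 Hl0) as [S0 HS0]. exists (S0 :: L).
      intros K [<-|HK] H Hf Hc.
      * exists S0. split; [left; reflexivity|].
        apply conj_ext with H0; [exact HS0|].
        apply conj_trans with K0; auto. apply conj_sym; auto.
      * destruct (IH K HK H Hf Hc) as [S [HS HS']]. exists S. split; [right|]; auto.
    + exists L. intros K [<-|HK] H Hf Hc.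
      * exfalso. apply Hn. exists H. auto.
      * eapply IH; eauto.
Qed.

Lemma emi (P : Prop) : {P} + {~ P}.
Proof.
  assert (E : exists b : bool, if b then P else ~ P)
    by (destruct (classic P); [exists true | exists false]; auto).
  destruct (constructive_indefinite_description _ E) as [[|] H]; [left|right]; exact H.
Qed.

Definition andF {V A : Type} (f : A -> qf V) (l : list A) : qf V :=
  fold_right (fun a acc => QAnd (f a) acc) QTrue l.
Definition orF {V A : Type} (f : A -> qf V) (l : list A) : qf V :=
  fold_right (fun a acc => QOr (f a) acc) (QNot QTrue) l.

Lemma andF_sem {G : Group} {V A : Type} (e : V -> G) (f : A -> qf V) (l : list A) :
  qholds e (andF f l) <-> forall a, In a l -> qholds e (f a).
Proof.
  induction l as [|a l IH]; simpl.
  - split; auto. intros _ _ [].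
  - rewrite IH. split.
    + intros [H1 H2] a' [<-|Hi]; auto.
    + intros H; split; auto.
Qed.

Lemma orF_sem {G : Group} {V A : Type} (e : V -> G) (f : A -> qf V) (l : list A) :
  qholds e (orF f l) <-> exists a, In a l /\ qholds e (f a).
Proof.
  induction l as [|a l IH]; simpl.
  - split. intro H; exfalso; apply H; exact I. intros [_ [[] _]].
  - rewrite IH. split.
    + intros [H|[a' [Hi H]]]; [exists a; auto | exists a'; auto].
    + intros [a' [[<-|Hi] H]]; [left|right; exists a']; auto.
Qed.

Fixpoint tmap {V W : Type} (h : V -> W) (t : term V) : term W :=
  match t with
  | TVar v => TVar (h v)
  | TOne => TOne
  | TMul a b => TMul (tmap h a) (tmap h b)
  | TInv a => TInv (tmap h a)
  end.

Definition envf {G : Group} {n m : nat} (x : fin n -> G) (y : fin m -> G) : fin n + fin m -> G :=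
  fun v => match v with inl i => x i | inr j => y j end.

Lemma teval_lift {G : Group} {n m : nat} (x : fin n -> G) (y : fin m -> G) (t : term (fin n)) :
  teval (envf x y) (tmap inl t) = teval x t.
Proof. induction t; simpl; congruence. Qed.

Lemma hom_teval (G H : Group) (phi : G -> H) n (g : fin n -> G) (x : fin n -> H) :
  is_hom phi -> (forall i, phi (g i) = x i) -> forall t, phi (teval g t) = teval x t.
Proof.
  intros Hh Hg t. induction t; simpl.
  - apply Hg.
  - apply hom_one; auto.
  - rewrite Hh; congruence.
  - rewrite hom_inv; congruence.
Qed.

Definition j0 : fin 1 := exist _ 0 (le_n 1).

Definition zt {n : nat} : term (fin n + fin 1) := TVar (inr j0).
Definition conjT {n : nat} (t : term (fin n + fin 1)) : term (fin n + fin 1) :=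
  TMul (TMul zt t) (TInv zt).

Definition ncF {G : Group} {n : nat} (T : G -> term (fin n + fin 1)) (Si Sj : list G) :=
  QOr (orF (fun b => andF (fun a => QNot (QEq (T b) (conjT (T a)))) Si) Sj)
      (orF (fun a => andF (fun b => QNot (QEq (T b) (conjT (T a)))) Sj) Si).

Lemma ncF_sem {G G0 : Group} {n : nat} (T : G -> term (fin n + fin 1)) (e : fin n + fin 1 -> G0)
  (f : G -> G0) (Hf : forall a, teval e (T a) = f a) (Si Sj : list G) :
  qholds e (ncF T Si Sj) <->
  (exists b, In b Sj /\ forall a, In a Si -> f b <> cj (e (inr j0)) (f a)) \/
  (exists a, In a Si /\ forall b, In b Sj -> f b <> cj (e (inr j0)) (f a)).
Proof.
  unfold ncF. simpl. rewrite !orF_sem. setoid_rewrite andF_sem. simpl.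
  setoid_rewrite Hf. unfold cj. tauto.
Qed.

Definition injF {G : Group} {n : nat} (T : G -> term (fin n + fin 1)) (L : list (list G)) :=
  andF (fun S => andF (fun a => andF (fun b =>
    if emi (a = b) then QTrue else QNot (QEq (T a) (T b))) S) S) L.

Definition ncAll {G : Group} {n : nat} (T : G -> term (fin n + fin 1)) (L : list (list G)) :=
  andF (fun Si => andF (fun Sj =>
    if emi (conjugate (fun w => In w Si) (fun w => In w Sj)) then QTrue else ncF T Si Sj) L) L.

Definition relF {n : nat} (rels : list (term (fin n) * term (fin n))) : qf (fin n + fin 1) :=
  andF (fun r => QEq (tmap inl (fst r)) (tmap inl (snd r))) rels.

Theorem lemma8p8 (G G' : Group) :
  finitely_presented G ->
  finitely_many_conj_classes_finite_subgroups G ->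
  AE_equivalent G G' ->
  exists phi : G -> G',
    is_hom phi /\
    (forall H : G -> Prop, finite_subgroup H ->
       forall x y, H x -> H y -> phi x = phi y -> x = y) /\
    (forall H K : G -> Prop, finite_subgroup H -> finite_subgroup K ->
       ~ conjugate H K -> ~ conjugate (image phi H) (image phi K)).
Proof.
  intros [n [g [rels [Hgen [Hrels Huniv]]]]] [l Hl] Hae.
  destruct (reps G l) as [L HL].
  assert (HLc : forall H, finite_subgroup H ->
            exists S, In S L /\ conjugate H (fun w => In w S)).
  { intros H Hf. destruct (Hl H Hf) as [K [HK Hc]]. eapply HL; eauto. }
  pose (tm := fun a => proj1_sig (constructive_indefinite_description _ (Hgen a))).
  assert (Htm : forall a, teval g (tm a) = a)
    by (intro a; exact (proj2_sig (constructive_indefinite_description _ (Hgen a)))).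
  pose (T := fun a => @tmap _ (fin n + fin 1) inl (tm a)).
  pose (theta := QAnd (relF rels) (QAnd (injF T L) (ncAll T L))).
  assert (HG : ~ AE_holds G n 1 (QNot theta)).
  { intros Hall. destruct (Hall g) as [y Hy]. apply Hy.
    change (qholds (envf g y) theta).
    assert (HT : forall a, teval (envf g y) (T a) = a)
      by (intro a; unfold T; rewrite teval_lift; apply Htm).
    split; [|split].
    - apply andF_sem. intros r Hr. simpl. rewrite !teval_lift. apply Hrels; auto.
    - apply andF_sem; intros S HS. apply andF_sem; intros a Ha.
      apply andF_sem; intros b Hb. destruct (emi (a = b)) as [_|Hne]; simpl; auto.
      rewrite !HT. exact Hne.
    - apply andF_sem; intros Si HSi. apply andF_sem; intros Sj HSj.
      destruct (emi (conjugate (fun w => In w Si) (fun w => In w Sj))) as [_|Hnc];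
        [exact I|].
      apply (ncF_sem T (envf g y) (fun a => a) HT).
      set (z := envf g y (inr j0)).
      destruct (classic (exists b, In b Sj /\ forall a, In a Si -> b <> cj z a)) as [H1|H1];
        [left; exact H1|].
      destruct (classic (exists a, In a Si /\ forall b, In b Sj -> b <> cj z a)) as [H2|H2];
        [right; exact H2|].
      exfalso. apply Hnc. exists z. intro x. split.
      + intro Hx. apply NNPP. intro Hn. apply H1. exists x. split; auto.
        intros a Ha Heq. apply Hn. exists a. split; auto.
      + intros [h [Hh Hx]]. apply NNPP. intro Hn. apply H2. exists h. split; auto.
        intros b Hb Heq. apply Hn. unfold cj in Heq. rewrite Hx, <- Heq. exact Hb. }
  assert (HG' : ~ AE_holds G' n 1 (QNot theta)).
  { intro H. apply HG. apply (Hae n 1 (QNot theta)). exact H. }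
  unfold AE_holds in HG'. apply not_all_ex_not in HG'. destruct HG' as [x' Hx'].
  assert (Hth : forall y, qholds (envf x' y) theta).
  { intro y. apply NNPP. intro Hn. apply Hx'. exists y. exact Hn. }
  assert (Hrels' : forall r, In r rels -> teval x' (fst r) = teval x' (snd r)).
  { intros r Hr. destruct (Hth (fun _ => gone)) as [HR _].
    apply andF_sem with (a := r) in HR; auto. simpl in HR.
    rewrite !teval_lift in HR. exact HR. }
  destruct (Huniv G' x' Hrels') as [phi [Hphi Hphig]].
  assert (HT : forall a y, teval (envf x' y) (T a) = phi a).
  { intros a y. unfold T. rewrite teval_lift.
    rewrite <- (hom_teval G G' phi n g x' Hphi Hphig). rewrite Htm. reflexivity. }
  exists phi. split; [exact Hphi|split].
  - intros H Hf x y Hx Hy Heq. destruct (HLc H Hf) as [S [HS [c Hc]]].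
    apply NNPP; intro Hne.
    destruct (Hth (fun _ => gone)) as [_ [Hi _]].
    assert (Ha : In (cj c x) S) by (apply Hc; exists x; auto).
    assert (Hb : In (cj c y) S) by (apply Hc; exists y; auto).
    apply andF_sem with (a := S) in Hi; auto.
    apply andF_sem with (a := cj c x) in Hi; auto.
    apply andF_sem with (a := cj c y) in Hi; auto.
    destruct (emi (cj c x = cj c y)) as [E|_].
    + apply Hne. eapply cj_inj; eauto.
    + simpl in Hi. apply Hi. rewrite !HT, !(cj_hom G G' phi Hphi), Heq. reflexivity.
  - intros H K Hf Kf Hnc Hcimg.
    destruct (HLc H Hf) as [Si [HSi HcH]].
    destruct (HLc K Kf) as [Sj [HSj HcK]].
    assert (Hn : ~ conjugate (fun w => In w Si) (fun w => In w Sj)).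
    { intro C. apply Hnc. apply conj_trans with (fun w => In w Sj).
      - apply conj_trans with (fun w => In w Si); auto.
      - apply conj_sym; auto. }
    assert (C' : conjugate (image phi (fun w => In w Si)) (image phi (fun w => In w Sj))).
    { apply conj_trans with (image phi K).
      - apply conj_trans with (image phi H).
        + apply conj_sym. apply conj_image; auto.
        + exact Hcimg.
      - apply conj_image; auto. }
    destruct C' as [z Hz].
    destruct (Hth (fun _ => z)) as [_ [_ Hnc']].
    apply andF_sem with (a := Si) in Hnc'; auto.
    apply andF_sem with (a := Sj) in Hnc'; auto.
    destruct (emi (conjugate (fun w => In w Si) (fun w => In w Sj))) as [C|_];
      [contradiction|].
    apply (ncF_sem T (envf x' (fun _ => z)) phi (fun a => HT a _)) in Hnc'.
    simpl in Hnc'.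
    destruct Hnc' as [[b [Hb Hb']] | [a [Ha Ha']]].
    + assert (Hx : image phi (fun w => In w Sj) (phi b)) by (exists b; auto).
      apply Hz in Hx. destruct Hx as [h [[a [Ha <-]] Heq]].
      apply (Hb' a Ha). exact Heq.
    + assert (Hx : image phi (fun w => In w Sj) (cj z (phi a))).
      { apply Hz. exists (phi a). split; [exists a; auto | reflexivity]. }
      destruct Hx as [b [Hb Heq]]. apply (Ha' b Hb). exact Heq.
Qed.
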